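(* Let $k,d\geq1$ and $L\geq4(k+1)d$, and let $\mathcal{T}^{d+1}$ be the teacher class defined in the context, with $H_\bullet=\{(2,0),(1,1)\}$. For every (possibly randomized) DFF algorithm $\mathcal{A}$, \[M^L_k(\mathcal{A},\mathcal{T}^{d+1},H_\bullet)\geq(k+1)d-1.\]
   Context: Setting. A teacher over $\mathcal{X},\mathcal{Y},\Phi$ ($\bot$ a null symbol) is a pair $T=(\ell,\psi)$ with $\ell:\mathcal{X}\to\mathcal{Y}$ and $\psi:\mathcal{X}\times\mathcal{X}\to\Phi\cup\{\bot\}$ such that whenever $\ell(x)\neq\ell(\hat x)$, $\phi:=\psi(x,\hat x)\in\Phi$, $\phi(x)=1$ and $\phi(\hat x)=0$. A teacher class is a set of teachers. A history is a non-empty $H\subseteq\mathcal{X}\times\mathcal{Y}$; a teacher $(\ell,\psi)$ is consistent with $H$ if $\ell(x)=y$ for all $(x,y)\in H$; $\mathcal{T}_H$ is the set of teachers in $\mathcal{T}$ consistent with $H$. DFF protocol. A DFF algorithm is given $H$ in advance. In each round $t$: an example $x_t$ arrives; the algorithm outputs $(\hat x_t,\hat y_t)\in H\cup\{(x_s,y_s):s<t\}$ (predicted label $\hat y_t$, explanation $\hat x_t$); if $\hat y_t=y_t$ (the provided label of $x_t$) it learns only that it was correct; otherwise (a mistake) it receives $y_t$ and a feature $\phi_t$. Non-realizable mistake bound with adaptive adversary. An interaction over $L$ rounds produces $S=((x_t,y_t,\hat x_t,\hat y_t,\phi_t))_{t\in[L]}$, with $\phi_t=\bot$ when $\hat y_t=y_t$.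 An adversary, in each round $t$, chooses $(x_t,y_t,\psi_t)$ with $\psi_t:\mathcal{X}\times\mathcal{X}\to\Phi\cup\{\bot\}$ as a function of the past interaction $S_{t-1}$; then the algorithm chooses $(\hat x_t,\hat y_t)$ (possibly randomly) as a function of $S_{t-1}$ and $x_t$; then, if $\hat y_t\neq y_t$, $\phi_t=\psi_t(x_t,\hat x_t)$ is revealed together with $y_t$. $S$ is $k$-consistent with a teacher $(f,\psi)$ if there is $E\subseteq[L]$, $|E|\leq k$, such that for all $t\in[L]\setminus E$, $f(x_t)=y_t$ and, if $\hat y_t\neq y_t$, $\psi(x_t,\hat x_t)=\phi_t$. $M^L_k(\mathcal{A},\mathcal{T},H)$ is the supremum, over all adversaries whose interaction with $\mathcal{A}$ produces with probability $1$ a sequence that is $k$-consistent with some teacher in $\mathcal{T}_H$, of the expected number of mistakes of $\mathcal{A}$ over $L$ rounds. Construction. $\mathcal{X}=\mathbb{N}=\{1,2,\dots\}$, $\mathcal{Y}=\{0,1\}$, $\Phi=\{0,1\}^{\mathcal{X}}$. For $i\geq0$ let $\mathcal{X}_i=\{2^i,2^i+1,\dots,2^{i+1}-1\}$. For $i\geq1$, $\mathcal{F}^d_i$ is the set of all $f:\mathcal{X}\to\{0,1\}$ with $f(1)=1$ and $f(x)=0$ for all $x\notin\mathcal{X}_i\cup\{1\}$ (arbitrary on $\mathcal{X}_i$). Let $p_i$ be a prime with $p_i\geq2^{|\mathcal{X}_i|}$ and fix an injective map $b_i:\mathcal{F}^d_i\to\mathbb{F}_{p_i}$. For $\bar c=(c_0,\dots,c_{d-1})\in\mathbb{F}_{p_i}^d$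 let $P'[\bar c](z)=(c_0+\sum_{j=1}^{d-1}c_jz^j)\bmod p_i$ and $P[\bar c]:\mathcal{X}_i\to\mathbb{N}$, $P[\bar c](x)=2^{i+1}+P'[\bar c](x-2^i+1)$ (viewing $P'$ values in $\{0,\dots,p_i-1\}$). For $x_1,\dots,x_l\in\mathcal{X}$ let $\mathbb{I}[x_1,\dots,x_l]$ be the feature equal to $1$ exactly on $\{x_1,\dots,x_l\}$. For $f\in\mathcal{F}^d_i$ and $\bar a:\mathcal{X}_i\times\{0,1\}\to\mathbb{F}^d_{p_i}$ define $\psi^f_{\bar a}(x,\hat x)=\mathbb{I}[x,\,P[\bar a(\hat x,f(x))](x)]$ if $x,\hat x\in\mathcal{X}_i$, and $\psi^f_{\bar a}(x,\hat x)=\mathbb{I}[x]$ otherwise. Let $\Psi_f=\{\psi^f_{\bar a}:\bar a:\mathcal{X}_i\times\{0,1\}\to\mathbb{F}^d_{p_i}$ such that for all $\hat x\in\mathcal{X}_i$ with $f(\hat x)=1$, the constant coefficient of $\bar a(\hat x,0)$ equals $b_i(f)\}$. Then $\mathcal{T}^d_i=\{(f,\psi):f\in\mathcal{F}^d_i,\psi\in\Psi_f\}$ and $\mathcal{T}^{d+1}=\bigcup_{i\geq1}\mathcal{T}^d_i$. *)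

(* Defs.v *)
From Stdlib Require Import Reals List Arith ZArith Znumtheory Bool.
Import ListNotations.
Open Scope R_scope.

(** Examples: X = N = {1,2,...}, represented by positive nats (0 is never an
    example: the adversary must pick x_t >= 1).  Labels Y = {0,1} = bool
    (false = 0, true = 1).  Features Phi = {0,1}^X = nat -> bool; the
    null symbol bot is [None] in [option feat]. *)
Definition feat := nat -> bool.

Definition is_teacher (l : nat -> bool) (psi : nat -> nat -> option feat) : Prop :=
  forall x xh : nat, (0 < x)%nat -> (0 < xh)%nat -> l x <> l xh ->
    exists phi, psi x xh = Some phi /\ phi x = true /\ phi xh = false.

Definition inXb (i x : nat) : bool := (2 ^ i <=? x)%nat && (x <? 2 ^ (i + 1))%nat.

Definition inF (i : nat) (f : nat -> bool) : Prop :=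
  f 1%nat = true /\ forall x, inXb i x = false -> x <> 1%nat -> f x = false.

Definition Pprime (d p : nat) (c : nat -> nat) (z : nat) : nat :=
  ((c 0%nat + fold_right (fun j acc => c j * z ^ j + acc) 0 (List.seq 1 (d - 1))) mod p)%nat.

Definition Pfun (i d p : nat) (c : nat -> nat) (x : nat) : nat :=
  (2 ^ (i + 1) + Pprime d p c (x - 2 ^ i + 1))%nat.

Definition indicator (l : list nat) : feat := fun z => existsb (Nat.eqb z) l.

(** psi^f_a ; a : X_i x {0,1} -> F_p^d is represented as
    a xh y j = j-th coefficient (j < d). *)
Definition psiFA (i d : nat) (p : nat -> nat) (f : nat -> bool)
    (a : nat -> bool -> nat -> nat) : nat -> nat -> option feat :=
  fun x xh =>
    if inXb i x && inXb i xh
    then Some (indicator [x; Pfun i d (p i) (a xh (f x)) x])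
    else Some (indicator [x]).

(** Membership in T^{d+1} = U_{i>=1} T^d_i (for fixed primes p_i and
    injections b_i). *)
Definition inT (d : nat) (p : nat -> nat) (b : nat -> feat -> nat)
    (l : nat -> bool) (psi : nat -> nat -> option feat) : Prop :=
  is_teacher l psi /\
  exists i : nat, (1 <= i)%nat /\ inF i l /\
    exists a : nat -> bool -> nat -> nat,
      (forall xh y j, inXb i xh = true -> (j < d)%nat -> (a xh y j < p i)%nat) /\
      (forall xh, inXb i xh = true -> l xh = true -> a xh false 0%nat = b i l) /\
      psi = psiFA i d p l a.

Definition consistentH (H : list (nat * bool)) (l : nat -> bool) : Prop :=
  forall xy, In xy H -> l (fst xy) = snd xy.

Definition Hbullet : list (nat * bool) := [(2%nat, false); (1%nat, true)].

(** One round of the interaction: (x_t, y_t, xhat_t, yhat_t, phi_t) *)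
Record entry := mkEntry {
  ex : nat; ey : bool; exh : nat; eyh : bool; ephi : option feat }.

(** A (randomized) DFF algorithm: a behavioural strategy mapping the past
    interaction S_{t-1} and x_t to a finitely supported distribution
    (list of (output, weight)) on outputs (xhat_t, yhat_t). *)
Definition alg_t := list entry -> nat -> list ((nat * bool) * R).

Definition wsum (l : list ((nat * bool) * R)) : R :=
  fold_right (fun ow acc => snd ow + acc) 0 l.

Definition alg_ok (H : list (nat * bool)) (A : alg_t) : Prop :=
  forall S x,
    Forall (fun ow => 0 <= snd ow) (A S x) /\ wsum (A S x) = 1 /\
    Forall (fun ow => In (fst ow) (H ++ map (fun e => (ex e, ey e)) S)) (A S x).

Definition adv_t := list entry -> nat * bool * (nat -> nat -> option feat).

Definition adv_ok (V : adv_t) : Prop := forall S, (0 < fst (fst (V S)))%nat.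

Definition round_entry (x : nat) (y : bool) (psi : nat -> nat -> option feat)
    (o : nat * bool) : entry :=
  mkEntry x y (fst o) (snd o) (if Bool.eqb (snd o) y then None else psi x (fst o)).

Fixpoint emist (A : alg_t) (V : adv_t) (S : list entry) (n : nat) : R :=
  match n with
  | O => 0
  | Datatypes.S n' =>
    let '(x, y, psi) := V S in
    fold_right (fun ow acc =>
      snd ow * ((if Bool.eqb (snd (fst ow)) y then 0 else 1)
                + emist A V (S ++ [round_entry x y psi (fst ow)]) n') + acc)
      0 (A S x)
  end.

Fixpoint almost_surely (A : alg_t) (V : adv_t) (P : list entry -> Prop)
    (S : list entry) (n : nat) : Prop :=
  match n with
  | O => P S
  | Datatypes.S n' =>
    let '(x, y, psi) := V S in
    forall ow, In ow (A S x) -> 0 < snd ow ->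
      almost_surely A V P (S ++ [round_entry x y psi (fst ow)]) n'
  end.

Definition dflt_entry : entry := mkEntry 0 false 0 false None.

Definition kcons (k : nat) (S : list entry) (l : nat -> bool)
    (psi : nat -> nat -> option feat) : Prop :=
  exists E : list nat, (length E <= k)%nat /\
    forall t, (t < length S)%nat -> ~ In t E ->
      let e := nth t S dflt_entry in
      l (ex e) = ey e /\ (eyh e <> ey e -> psi (ex e) (exh e) = ephi e).

Definition valid_adv (k d L : nat) (p : nat -> nat) (b : nat -> feat -> nat)
    (H : list (nat * bool)) (A : alg_t) (V : adv_t) : Prop :=
  adv_ok V /\
  almost_surely A V (fun S => exists l psi,
      inT d p b l psi /\ consistentH H l /\ kcons k S l psi) [] L.

(* Main.v *)
Require Import Defs.
From Stdlib Require Import Reals List Arith ZArith Znumtheory.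
From Stdlib Require Import Lra Lia ClassicalEpsilon Bool.
Import ListNotations.
Open Scope R_scope.

Module Part1.
Import ListNotations.
Local Open Scope R_scope.

Fixpoint G (n : nat) (m : nat) : R :=
  match n with
  | O => 0
  | Datatypes.S n' => match m with
         | O => 1/2
         | Datatypes.S m' => (G n' (Datatypes.S m') + 1 + G n' m') / 2
         end
  end.

Lemma G_mono : forall n m, 0 <= G n m /\ G n m <= G n (Datatypes.S m) <= G n m + 1.
Proof.
  induction n as [|n IH]; intros m.
  - simpl; lra.
  - destruct m as [|m].
    + simpl. destruct (IH 0%nat) as [H0 [H1 H2]].
      destruct n as [|n]; simpl in *; lra.
    + destruct (IH m) as [A0 [A1 A2]]. destruct (IH (Datatypes.S m)) as [B0 [B1 B2]].
      change (G (Datatypes.S n) (Datatypes.S m)) with ((G n (Datatypes.S m) + 1 + G n m)/2).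
      change (G (Datatypes.S n) (Datatypes.S (Datatypes.S m))) with
         ((G n (Datatypes.S (Datatypes.S m)) + 1 + G n (Datatypes.S m))/2).
      lra.
Qed.

Lemma pow2_ge : forall m, INR m + 1/2 <= 2 ^ m.
Proof.
  induction m as [|m IH]; [simpl; lra|].
  rewrite S_INR. change (2 ^ Datatypes.S m) with (2 * 2 ^ m).
  assert (1 <= 2 ^ m) by (apply pow_R1_Rle; lra). lra.
Qed.

Lemma G_lower : forall n m, INR m + 1/2 - 2 ^ m * (3/4) ^ n <= G n m.
Proof.
  induction n as [|n IH]; intros m.
  - simpl. rewrite Rmult_1_r. pose proof (pow2_ge m). lra.
  - destruct m as [|m].
    + simpl. pose proof (pow_le (3/4) n). lra.
    + change (G (Datatypes.S n) (Datatypes.S m)) with ((G n (Datatypes.S m) + 1 + G n m)/2).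
      pose proof (IH m). pose proof (IH (Datatypes.S m)).
      rewrite S_INR in *. simpl in *. nra.
Qed.

Lemma G_final : forall D L, (4 * (D + 1) <= L)%nat -> INR D <= G L D.
Proof.
  intros D L HL. pose proof (G_lower L D).
  assert (Hp : (3/4) ^ L <= (3/4) ^ (4 * (D+1))).
  { replace L with (4 * (D+1) + (L - 4 * (D+1)))%nat by lia.
    rewrite pow_add. 
    assert (0 <= (3/4) ^ (4 * (D+1))) by (apply pow_le; lra).
    assert ((3/4) ^ (L - 4 * (D+1)) <= 1).
    { rewrite <- (pow1 (L - 4 * (D + 1))). apply pow_incr; lra. }
    nra. }
  rewrite pow_mult in Hp.
  replace ((3/4)^4) with (81/256) in Hp by (simpl; field).
  rewrite pow_add in Hp. simpl pow in Hp at 2.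
  assert (E : 2 ^ D * (81/256) ^ D = (162/256) ^ D).
  { rewrite <- Rpow_mult_distr. f_equal. field. }
  assert ((162/256) ^ D <= 1).
  { rewrite <- (pow1 D). apply pow_incr; lra. }
  assert (0 <= 2 ^ D) by (apply pow_le; lra).
  assert (0 <= (81/256) ^ D) by (apply pow_le; lra).
  assert (2 ^ D * (3/4) ^ L <= 1/2).
  { apply Rle_trans with (2 ^ D * ((81/256) ^ D * (81/256 * 1))).
    apply Rmult_le_compat_l; lra.
    replace (2 ^ D * ((81 / 256) ^ D * (81 / 256 * 1))) with (81/256 * (2 ^ D * (81/256) ^ D)) by ring.
    rewrite E. lra. }
  lra.
Qed.

End Part1.
Import Part1.

Module Part2.
Import ListNotations.
Local Open Scope Z_scope.

Fixpoint sumZ (f : nat -> Z) (n : nat) : Z :=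
  match n with O => 0 | Datatypes.S n' => sumZ f n' + f n' end.

Lemma sumZ_shift : forall f n, sumZ f (Datatypes.S n) = f O + sumZ (fun j => f (Datatypes.S j)) n.
Proof. intros f n; induction n; simpl in *; lia. Qed.

Lemma sumZ_ext : forall f g n, (forall j, (j < n)%nat -> f j = g j) -> sumZ f n = sumZ g n.
Proof. intros f g n H; induction n; simpl; auto. rewrite IHn by (intros; apply H; lia). rewrite H by lia. auto. Qed.

Lemma sumZ_add : forall f g n, sumZ (fun j => f j + g j) n = sumZ f n + sumZ g n.
Proof. intros; induction n; simpl; lia. Qed.

Lemma sumZ_scal : forall c f n, sumZ (fun j => c * f j) n = c * sumZ f n.
Proof. intros; induction n; simpl; [ring|]. rewrite IHn. ring. Qed.

Lemma sumZ_opp : forall f n, sumZ (fun j => - f j) n = - sumZ f n.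
Proof. intros; induction n; simpl; lia. Qed.

Fixpoint coefQ (l : list Z) (j : nat) : Z :=
  match l with
  | [] => if Nat.eqb j 0 then 1 else 0
  | w :: l' => w * coefQ l' j - match j with O => 0 | Datatypes.S j' => coefQ l' j' end
  end.

Definition prodQ (l : list Z) (z : Z) : Z := fold_right (fun w acc => (w - z) * acc) 1 l.

Lemma coefQ_high : forall l j, (length l < j)%nat -> coefQ l j = 0.
Proof.
  induction l as [|w l IH]; intros j Hj; simpl in *.
  - destruct j; [lia|reflexivity].
  - destruct j as [|j]; [lia|]. rewrite IH by lia. rewrite IH by lia. ring.
Qed.

Lemma coefQ_0 : forall l, coefQ l 0 = fold_right Z.mul 1 l.
Proof. induction l; simpl; auto. rewrite IHl. ring. Qed.

Lemma coefQ_eval : forall l z n, (length l < n)%nat ->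
  sumZ (fun j => coefQ l j * z ^ Z.of_nat j) n = prodQ l z.
Proof.
  induction l as [|w l IH]; intros z n Hn; simpl in *.
  - destruct n as [|n]; [lia|]. rewrite sumZ_shift. simpl.
    assert (E : forall m, sumZ (fun _ => 0) m = 0).
    { induction m; simpl; lia. }
    rewrite E. unfold prodQ. simpl. ring.
  - destruct n as [|n]; [lia|].
    rewrite (sumZ_ext _ (fun j => w * (coefQ l j * z ^ Z.of_nat j) +
          - (match j with O => 0 | Datatypes.S j' => coefQ l j' end * z ^ Z.of_nat j)))
      by (intros; ring).
    rewrite sumZ_add, sumZ_scal, sumZ_opp.
    rewrite IH by lia.
    rewrite (sumZ_shift (fun j => _)). simpl.
    rewrite (sumZ_ext _ (fun j => z * (coefQ l j * z ^ Z.of_nat j))).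
    2:{ intros j _. change (Z.pow_pos z (Pos.of_succ_nat j)) with (z ^ Z.of_nat (Datatypes.S j)). rewrite Nat2Z.inj_succ, Z.pow_succ_r by lia. ring. }
    rewrite sumZ_scal, IH by lia. unfold prodQ. simpl. ring.
Qed.

Lemma prodQ_root : forall l z, In z l -> prodQ l z = 0.
Proof.
  induction l as [|w l IH]; intros z H; simpl in *; [tauto|].
  destruct H as [<-|H]. unfold prodQ; simpl; ring. unfold prodQ in *. simpl. rewrite (IH z H). ring.
Qed.

Lemma fold_seq_Z : forall (c : nat -> nat) (z : nat) n s,
  Z.of_nat (fold_right (fun j acc => (c j * z ^ j + acc)%nat) 0%nat (seq s n)) +
    sumZ (fun j => Z.of_nat (c j) * Z.of_nat z ^ Z.of_nat j) s =
  sumZ (fun j => Z.of_nat (c j) * Z.of_nat z ^ Z.of_nat j) (s + n).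
Proof.
  intros c z n; induction n as [|n IH]; intros s; simpl.
  - rewrite Nat.add_0_r. lia.
  - rewrite Nat2Z.inj_add, Nat2Z.inj_mul, Nat2Z.inj_pow.
    specialize (IH (Datatypes.S s)). rewrite <- Nat.add_succ_comm.
    rewrite <- IH. change (sumZ ?F (Datatypes.S s)) with (sumZ F s + F s). lia.
Qed.

Lemma sumZ_mod : forall (g y : nat -> Z) P n,
  (sumZ (fun j => (g j mod P) * y j) n) mod P = (sumZ (fun j => g j * y j) n) mod P.
Proof.
  intros g y P n; induction n as [|n IH]; simpl; auto.
  rewrite Zplus_mod, IH, Zmult_mod_idemp_l, <- Zplus_mod. reflexivity.
Qed.

Lemma Pprime_eval : forall d p l K z, (0 < p)%nat -> (length l < d)%nat ->
  Z.of_nat (Pprime d p (fun j => Z.to_nat ((K * coefQ l j) mod Z.of_nat p)) z) =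
  (K * prodQ l (Z.of_nat z)) mod Z.of_nat p.
Proof.
  intros d p l K z Hp Hd. unfold Pprime.
  rewrite Nat2Z.inj_mod.
  set (c := fun j => Z.to_nat ((K * coefQ l j) mod Z.of_nat p)).
  assert (E : Z.of_nat (c 0%nat + fold_right (fun j acc => (c j * z ^ j + acc)%nat) 0%nat (seq 1 (d - 1)))
     = sumZ (fun j => Z.of_nat (c j) * Z.of_nat z ^ Z.of_nat j) d).
  { pose proof (fold_seq_Z c z (d-1) 1).
    replace (1 + (d-1))%nat with d in H by lia.
    change (sumZ ?F 1) with (0 + F 0%nat) in H. cbv beta in H.
    rewrite Z.pow_0_r in H. rewrite Nat2Z.inj_add. lia. }
  change (Z.of_nat (c 0%nat + fold_right (fun j acc => (c j * z ^ j + acc)%nat) 0%nat (seq 1 (d-1))) mod Z.of_nat p = (K * prodQ l (Z.of_nat z)) mod Z.of_nat p). rewrite E.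
  rewrite (sumZ_ext _ (fun j => ((K * coefQ l j) mod Z.of_nat p) * Z.of_nat z ^ Z.of_nat j)).
  2:{ intros j _. unfold c. rewrite Z2Nat.id. reflexivity. apply Z.mod_pos_bound. lia. }
  rewrite (sumZ_mod (fun j => K * coefQ l j)).
  rewrite (sumZ_ext _ (fun j => K * (coefQ l j * Z.of_nat z ^ Z.of_nat j))) by (intros; ring).
  rewrite sumZ_scal, coefQ_eval by auto. reflexivity.
Qed.

End Part2.
Import Part2.

Module Part3.
Import ListNotations.
Local Open Scope Z_scope.

Lemma prod_not_div : forall P l, prime P -> (forall w, In w l -> 0 < w < P) ->
  ~ (P | fold_right Z.mul 1 l).
Proof.
  intros P l HP; induction l as [|w l IH]; intros Hl Hd; simpl in *.
  - apply Z.divide_pos_le in Hd; [|lia]. pose proof (prime_ge_2 _ HP). lia.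
  - apply prime_mult in Hd; auto. destruct Hd as [Hd|Hd].
    + apply Z.divide_pos_le in Hd; [|apply Hl; auto]. specialize (Hl w (or_introl eq_refl)). lia.
    + apply IH; auto.
Qed.

Lemma inv_exists : forall P a, prime P -> ~ (P | a) -> exists u, (u * a) mod P = 1.
Proof.
  intros P a HP Hd. apply prime_rel_prime in Hd; auto.
  apply rel_prime_sym, rel_prime_bezout in Hd. destruct Hd as [u v Huv].
  exists u. replace (u * a) with (1 + (-v) * P) by lia.
  rewrite Z_mod_plus_full. apply Z.mod_1_l. pose proof (prime_ge_2 _ HP). lia.
Qed.

End Part3.
Import Part3.

Module Part4.
Import ListNotations.
Local Open Scope R_scope.
Local Open Scope bool_scope.

Definition danger (i : nat) (e : entry) : bool :=
  eyh e && negb (ey e) && inXb i (ex e) && inXb i (exh e).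
Definition Tcnt i (S : list entry) : nat := length (filter (danger i) S).
Definition cntD i (S : list entry) (x : nat) : nat :=
  length (filter (fun e => danger i e && Nat.eqb (exh e) x) S).
Definition sacr i d S x : bool := Nat.leb d (cntD i S x).
Definition fstar i d (S : list entry) : nat -> bool := fun x =>
  Nat.eqb x 1 || (inXb i x && Nat.ltb (x - 2 ^ i) (length S) &&
                  ey (nth (x - 2 ^ i) S dflt_entry) && negb (sacr i d S x)).
Definition Zset i (S : list entry) (x : nat) : list Z :=
  map (fun e => Z.of_nat (ex e - 2 ^ i + 1)) (filter (fun e => danger i e && Nat.eqb (exh e) x) S).
Definition invZ (P a : Z) : Z := epsilon (inhabits 0%Z) (fun u => ((u * a) mod P = 1)%Z).
Definition astar i d (p : nat -> nat) (b : nat -> feat -> nat) S : nat -> bool -> nat -> nat :=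
  fun xh y j =>
  if y then 0%nat else if fstar i d S xh then
    Z.to_nat (((Z.of_nat (b i (fstar i d S)) *
       invZ (Z.of_nat (p i)) (fold_right Z.mul 1%Z (Zset i S xh))) * coefQ (Zset i S xh) j)
       mod Z.of_nat (p i))
  else 0%nat.
Definition psiStar i d p b S := psiFA i d p (fstar i d S) (astar i d p b S).
Definition psi0 i d p := psiFA i d p (fun _ => false) (fun _ _ _ => 0%nat).

Definition step i D (st : list entry * bool) (e : entry) : list entry * bool :=
  let (Sp, c) := st in
  if c then (Sp, true)
  else if Nat.eqb (Tcnt i Sp) D && negb (ey e) then (Sp, true) else (Sp ++ [e], false).
Definition status i D S := fold_left (step i D) S ([], false).

Definition qone (l : list ((nat * bool) * R)) : R :=
  fold_right (fun (ow : (nat * bool) * R) (acc : R) => snd ow * (if snd (fst ow) then 1 else 0) + acc) 0 l.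

Definition Vadv i d D p b (A : alg_t) : adv_t := fun S =>
  let (Sp, c) := status i D S in
  if c then (2%nat, false, psi0 i d p)
  else let x := (2 ^ i + length S)%nat in
    if Rle_dec (qone (A S x)) (1/2) then (x, true, psi0 i d p)
    else if Nat.ltb (Tcnt i Sp) D then (x, false, psi0 i d p)
    else (x, false, psiStar i d p b Sp).

Definition wf (f : (nat * bool) * R -> R) (l : list ((nat * bool) * R)) : R :=
  fold_right (fun (ow : (nat * bool) * R) (acc : R) => snd ow * f ow + acc) 0 l.

Lemma wf_mono : forall f g l, Forall (fun ow => 0 <= snd ow) l ->
  (forall ow, In ow l -> g ow <= f ow) -> wf g l <= wf f l.
Proof.
  intros f g l Hl H; induction l as [|ow l IH]; simpl; [lra|].
  inversion Hl; subst. pose proof (H ow (or_introl eq_refl)).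
  assert (wf g l <= wf f l) by (apply IH; auto; intros; apply H; right; auto).
  unfold wf in *. nra.
Qed.

Lemma wf_if : forall c1 c0 l,
  wf (fun ow => if snd (fst ow) then c1 else c0) l = c1 * qone l + c0 * (wsum l - qone l).
Proof.
  intros c1 c0 l; induction l as [|ow l IH]; unfold wf, wsum, qone in *; simpl; [lra|].
  rewrite IH. destruct (snd (fst ow)); lra.
Qed.

Lemma emist_S : forall A V S n, emist A V S (Datatypes.S n) =
  let '(x, y, psi) := V S in
  wf (fun ow => (if Bool.eqb (snd (fst ow)) y then 0 else 1) +
                emist A V (S ++ [round_entry x y psi (fst ow)]) n) (A S x).
Proof. reflexivity. Qed.

Lemma wf_const : forall c l, wf (fun _ => c) l = c * wsum l.
Proof. intros c l; induction l; unfold wf, wsum in *; simpl; [lra|]. rewrite IHl. lra. Qed.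

Section Game.
Variables (i d D : nat) (p : nat -> nat) (b : nat -> feat -> nat) (A : alg_t).
Hypothesis HA : alg_ok Hbullet A.
Let V := Vadv i d D p b A.

Lemma emist_nonneg : forall n S, 0 <= emist A V S n.
Proof.
  induction n as [|n IH]; intros S; [simpl; lra|].
  rewrite emist_S. destruct (V S) as [[x y] psi].
  destruct (HA S x) as [Hnn [Hs _]].
  apply Rle_trans with (wf (fun _ => 0) (A S x)).
  rewrite wf_const; lra.
  apply wf_mono; auto. intros ow _. pose proof (IH (S ++ [round_entry x y psi (fst ow)])).
  destruct (Bool.eqb _ _); lra.
Qed.

Lemma status_app : forall S e, status i D (S ++ [e]) = step i D (status i D S) e.
Proof. intros. unfold status. rewrite fold_left_app. reflexivity. Qed.

Lemma Tcnt_app : forall Sp e, Tcnt i (Sp ++ [e]) = (Tcnt i Sp + if danger i e then 1 else 0)%nat.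
Proof. intros. unfold Tcnt. rewrite filter_app, length_app. simpl. destruct (danger i e); reflexivity. Qed.

Lemma G_mono_gen : forall n m m', (m <= m')%nat -> G n m <= G n m'.
Proof.
  intros n m m' H. induction H; [lra|]. pose proof (G_mono n m0). lra.
Qed.

Lemma emist_lb : forall n S Sp, status i D S = (Sp, false) -> (Tcnt i Sp <= D)%nat ->
  G n (D - Tcnt i Sp) <= emist A V S n.
Proof.
  induction n as [|n IH]; intros S Sp Hst HT; [simpl; lra|].
  rewrite emist_S. unfold V at 1, Vadv. rewrite Hst.
  destruct (HA S (2 ^ i + length S)%nat) as [Hnn [Hs _]].
  set (x := (2 ^ i + length S)%nat) in *.
  destruct (Rle_dec (qone (A S x)) (1/2)) as [Hq|Hq].
  -
    apply Rle_trans with (wf (fun ow => if snd (fst ow) then G n (D - Tcnt i Sp) else 1 + G n (D - Tcnt i Sp)) (A S x)).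
    + rewrite wf_if, Hs. pose proof (G_mono n (D - Tcnt i Sp)%nat).
      destruct (D - Tcnt i Sp)%nat as [|m] eqn:Em.
      * simpl. destruct n; simpl in *; lra.
      * change (G (Datatypes.S n) (Datatypes.S m)) with ((G n (Datatypes.S m) + 1 + G n m)/2).
        pose proof (G_mono n m). lra.
    + apply wf_mono; auto. intros ow _.
      set (e := round_entry x true (psi0 i d p) (fst ow)).
      assert (Hd : danger i e = false).
      { unfold e, danger, round_entry. simpl. rewrite !andb_false_r. reflexivity. }
      assert (Hn : G n (D - Tcnt i (Sp ++ [e])) <= emist A V (S ++ [e]) n).
      { apply IH.
        - rewrite status_app, Hst. simpl. unfold e at 1. simpl. rewrite andb_false_r. reflexivity.
        - rewrite Tcnt_app, Hd. lia. }
      rewrite Tcnt_app, Hd, Nat.add_0_r in Hn.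
      destruct (snd (fst ow)); simpl; lra.
  - destruct (Nat.ltb (Tcnt i Sp) D) eqn:Hlt.
    + apply Nat.ltb_lt in Hlt.
      destruct (D - Tcnt i Sp)%nat as [|m] eqn:Em; [lia|].
      apply Rle_trans with (wf (fun ow => if snd (fst ow) then 1 + G n m else G n (Datatypes.S m)) (A S x)).
      * rewrite wf_if, Hs.
        change (G (Datatypes.S n) (Datatypes.S m)) with ((G n (Datatypes.S m) + 1 + G n m)/2).
        pose proof (G_mono n m). apply Rnot_le_lt in Hq. nra.
      * apply wf_mono; auto. intros ow _.
        set (e := round_entry x false (psi0 i d p) (fst ow)).
        assert (Hst' : status i D (S ++ [e]) = (Sp ++ [e], false)).
        { rewrite status_app, Hst. unfold step. replace (Nat.eqb (Tcnt i Sp) D) with false by (symmetry; apply Nat.eqb_neq; lia). reflexivity. }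
        destruct (snd (fst ow)) eqn:Ey.
        -- assert (Hn : G n (D - (Tcnt i Sp + if danger i e then 1 else 0)) <= emist A V (S ++ [e]) n).
           { rewrite <- Tcnt_app. apply IH; auto. rewrite Tcnt_app. destruct (danger i e); lia. }
           assert (G n m <= G n (D - (Tcnt i Sp + if danger i e then 1 else 0))).
           { apply G_mono_gen. destruct (danger i e); lia. }
           unfold e in *. simpl. lra.
        -- assert (Hd : danger i e = false).
           { unfold e, danger, round_entry. simpl. rewrite Ey. reflexivity. }
           assert (Hn : G n (D - Tcnt i (Sp ++ [e])) <= emist A V (S ++ [e]) n).
           { apply IH; auto. rewrite Tcnt_app, Hd. lia. }
           rewrite Tcnt_app, Hd, Nat.add_0_r, Em in Hn. unfold e in *. simpl. lra.
    + apply Nat.ltb_ge in Hlt. replace (D - Tcnt i Sp)%nat with 0%nat by lia.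
      apply Rle_trans with (wf (fun ow => if snd (fst ow) then 1 else 0) (A S x)).
      * rewrite wf_if, Hs. simpl. destruct n; lra.
      * apply wf_mono; auto. intros ow _.
        pose proof (emist_nonneg n (S ++ [round_entry x false (psiStar i d p b Sp) (fst ow)])).
        destruct (snd (fst ow)); simpl; lra.
Qed.
End Game.

End Part4.
Import Part4.

Module Part5.
Import ListNotations.
Local Open Scope R_scope.
Local Open Scope bool_scope.

Section Inv.
Variables (i d D : nat) (p : nat -> nat) (b : nat -> feat -> nat) (A : alg_t).
Let V := Vadv i d D p b A.

Definition Inv (S : list entry) : Prop :=
  let (Sp, c) := status i D S in
  (forall t, (t < length Sp)%nat -> ex (nth t Sp dflt_entry) = (2 ^ i + t)%nat) /\
  (forall e, In e Sp -> eyh e <> ey e -> ephi e = psi0 i d p (ex e) (exh e)) /\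
  (Tcnt i Sp <= D)%nat /\
  (if c then exists ec post, S = Sp ++ ec :: post /\ ex ec = (2 ^ i + length Sp)%nat /\
        ey ec = false /\ (eyh ec <> ey ec -> ephi ec = psiStar i d p b Sp (ex ec) (exh ec)) /\
        (forall e, In e post -> ex e = 2%nat /\ ey e = false /\
              (eyh e <> ey e -> ephi e = psi0 i d p (ex e) (exh e)))
   else S = Sp).

Lemma Inv_nil : Inv [].
Proof.
  unfold Inv. simpl. repeat split; try (intros; simpl in *; lia); try tauto.
  unfold Tcnt. simpl. lia.
Qed.

Lemma ephi_round : forall x y psi o, eyh (round_entry x y psi o) <> ey (round_entry x y psi o) ->
  ephi (round_entry x y psi o) = psi x (fst o).
Proof.
  intros x y psi [xh yh] H. unfold round_entry in *. simpl in *.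
  destruct yh, y; simpl in *; congruence.
Qed.

Lemma Inv_step : forall S o, Inv S ->
  Inv (S ++ [round_entry (fst (fst (V S))) (snd (fst (V S))) (snd (V S)) o]).
Proof.
  intros S o HI. unfold Inv in *.
  rewrite (status_app i D).
  destruct (status i D S) as [Sp c] eqn:Hst.
  destruct HI as [I1 [I2 [I3 I4]]].
  unfold V, Vadv. rewrite Hst.
  destruct c.
  -
    simpl. repeat split; auto.
    destruct I4 as [ec [post [HS [H1 [H2 [H3 H4]]]]]].
    exists ec, (post ++ [round_entry 2 false (psi0 i d p) o]).
    split. { rewrite HS. rewrite <- app_assoc. reflexivity. }
    split; [exact H1|]. split; [exact H2|]. split; [exact H3|].
    intros e0 He. apply in_app_or in He. destruct He as [He|[He|[]]]; [apply H4; auto|].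
    subst e0. split; [reflexivity|]. split; [reflexivity|]. apply ephi_round.
  - subst S. set (x := (2 ^ i + length Sp)%nat).
    destruct (Rle_dec (qone (A Sp x)) (1 / 2)).
    + simpl. rewrite andb_false_r.
      set (e := round_entry x true (psi0 i d p) o).
      assert (Hd : danger i e = false).
      { unfold e, danger, round_entry. simpl. rewrite !andb_false_r. reflexivity. }
      repeat split; auto.
      * intros t Ht. rewrite length_app in Ht; simpl in Ht.
        destruct (Nat.lt_ge_cases t (length Sp)).
        -- rewrite app_nth1 by auto. auto.
        -- replace t with (length Sp) by lia. rewrite nth_middle. reflexivity.
      * intros e' He'. apply in_app_or in He'. destruct He' as [He'|[He'|[]]]; [apply I2; auto|].
        subst e'. apply ephi_round.
      * rewrite Tcnt_app, Hd. lia.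
    + destruct (Nat.ltb (Tcnt i Sp) D) eqn:Hlt.
      * apply Nat.ltb_lt in Hlt. simpl.
        replace (Nat.eqb (Tcnt i Sp) D) with false by (symmetry; apply Nat.eqb_neq; lia).
        simpl.
        repeat split; auto.
        -- intros t Ht. rewrite length_app in Ht; simpl in Ht.
           destruct (Nat.lt_ge_cases t (length Sp)).
           ++ rewrite app_nth1 by auto. auto.
           ++ replace t with (length Sp) by lia. rewrite nth_middle. reflexivity.
        -- intros e' He'. apply in_app_or in He'. destruct He' as [He'|[He'|[]]]; [apply I2; auto|].
           subst e'. apply ephi_round.
        -- rewrite Tcnt_app. destruct (danger i _); lia.
      * apply Nat.ltb_ge in Hlt. simpl.
        replace (Nat.eqb (Tcnt i Sp) D) with true by (symmetry; apply Nat.eqb_eq; lia).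
        simpl. repeat split; auto.
        exists (round_entry x false (psiStar i d p b Sp) o), (@nil entry).
        split; [reflexivity|]. split; [reflexivity|]. split; [reflexivity|].
        split; [apply ephi_round|]. intros e0 [].
Qed.

End Inv.

End Part5.
Import Part5.

Module Part6.
Import ListNotations.
Local Open Scope nat_scope.
Local Open Scope bool_scope.

Lemma inXb_iff : forall i x, inXb i x = true <-> 2 ^ i <= x < 2 * 2 ^ i.
Proof.
  intros i x. unfold inXb. rewrite andb_true_iff, Nat.leb_le, Nat.ltb_lt.
  rewrite Nat.add_1_r, Nat.pow_succ_r'. tauto.
Qed.

Lemma pow_ge4 : forall i, 2 <= i -> 4 <= 2 ^ i.
Proof. intros i Hi. replace 4 with (2 ^ 2) by reflexivity. apply Nat.pow_le_mono_r; lia. Qed.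

Lemma inXb_small : forall i x, 2 <= i -> x < 4 -> inXb i x = false.
Proof.
  intros i x Hi Hx. destruct (inXb i x) eqn:E; auto. apply inXb_iff in E. pose proof (pow_ge4 i Hi). lia.
Qed.

Lemma Pprime_zero : forall d p z, 0 < p -> Pprime d p (fun _ => 0) z = 0.
Proof.
  intros d p z Hp. unfold Pprime.
  assert (H : forall l, fold_right (fun j acc => 0 * z ^ j + acc) 0 l = 0).
  { induction l; simpl; auto. }
  rewrite H. simpl. apply Nat.Div0.mod_0_l.
Qed.

Lemma psiFA_teacher : forall i d p f a, 1 <= i -> is_teacher f (psiFA i d p f a).
Proof.
  intros i d p f a Hi x xh _ _ Hne.
  assert (Hx : x <> xh) by (intro; subst; auto).
  unfold psiFA. destruct (inXb i x && inXb i xh) eqn:E.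
  - eexists; split; [reflexivity|]. unfold indicator. simpl. rewrite Nat.eqb_refl. split; auto.
    apply andb_true_iff in E. destruct E as [_ E]. apply inXb_iff in E.
    unfold Pfun. rewrite Nat.add_1_r, Nat.pow_succ_r'.
    destruct (Nat.eqb xh x) eqn:E1; [apply Nat.eqb_eq in E1; lia|].
    destruct (Nat.eqb xh (2 * 2 ^ i + _)) eqn:E2; [apply Nat.eqb_eq in E2; lia|]. reflexivity.
  - eexists; split; [reflexivity|]. unfold indicator. simpl. rewrite Nat.eqb_refl. split; auto.
    destruct (Nat.eqb xh x) eqn:E1; [apply Nat.eqb_eq in E1; lia|]. reflexivity.
Qed.

Definition sumL (f : nat -> nat) (l : list nat) : nat := fold_right (fun t acc => f t + acc) 0 l.

Lemma sumL_filter : forall f P l, sumL f (filter P l) <= sumL f l.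
Proof. intros f P l; induction l; simpl; auto. destruct (P a); simpl; lia. Qed.

Lemma sumL_ext : forall f g l, (forall t, f t = g t) -> sumL f l = sumL g l.
Proof. intros f g l H; induction l; simpl; auto. Qed.

Lemma sumL_zero : forall l, sumL (fun _ => 0) l = 0.
Proof. induction l; simpl; auto. Qed.

Lemma sumL_add : forall f g l, sumL (fun t => f t + g t) l = sumL f l + sumL g l.
Proof. intros; induction l; simpl; lia. Qed.

Lemma sumL_lb : forall f c l, (forall t, In t l -> c <= f t) -> c * length l <= sumL f l.
Proof.
  intros f c l H; induction l; simpl; [lia|].
  assert (c <= f a) by (apply H; left; reflexivity). assert (c * length l <= sumL f l) by (apply IHl; intros; apply H; right; auto). lia.
Qed.

Lemma sumL_seq0 : forall y base N s, y < base + s ->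
  sumL (fun t => if Nat.eqb y (base + t) then 1 else 0) (seq s N) = 0.
Proof.
  intros y base N; induction N; intros s H; simpl; auto.
  destruct (Nat.eqb y (base + s)) eqn:E; [apply Nat.eqb_eq in E; lia|].
  rewrite IHN; lia.
Qed.

Lemma sumL_seq1 : forall y base N s,
  sumL (fun t => if Nat.eqb y (base + t) then 1 else 0) (seq s N) <= 1.
Proof.
  intros y base N; induction N; intros s; simpl; [lia|].
  destruct (Nat.eqb y (base + s)) eqn:E.
  - apply Nat.eqb_eq in E. rewrite sumL_seq0; lia.
  - apply IHN.
Qed.

Lemma sum_cnt : forall i S base N,
  sumL (fun t => cntD i S (base + t)) (seq 0 N) <= Tcnt i S.
Proof.
  intros i S base N; induction S as [|e S IH].
  - unfold cntD, Tcnt. simpl. induction (seq 0 N); simpl; auto.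
  - assert (E : forall x, cntD i (e :: S) x =
        (if danger i e && Nat.eqb (exh e) x then 1 else 0) + cntD i S x).
    { intros x. unfold cntD. simpl. destruct (danger i e && Nat.eqb (exh e) x); reflexivity. }
    rewrite (sumL_ext _ (fun t => (if danger i e && Nat.eqb (exh e) (base + t) then 1 else 0)
                            + cntD i S (base + t))) by (intros; apply E).
    rewrite sumL_add.
    assert (HT : Tcnt i (e :: S) = (if danger i e then 1 else 0) + Tcnt i S).
    { unfold Tcnt. simpl. destruct (danger i e); reflexivity. }
    rewrite HT.
    destruct (danger i e); simpl.
    + pose proof (sumL_seq1 (exh e) base N 0). lia.
    + rewrite sumL_zero. lia.
Qed.
Section Final.
Variables (k i d D : nat) (p : nat -> nat) (b : nat -> feat -> nat).
Hypothesis Hi : 2 <= i.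
Hypothesis Hp : prime (Z.of_nat (p i)) /\ 2 ^ (2 ^ i) <= p i.
Hypothesis Hb : forall f, inF i f -> b i f < p i.
Hypothesis Hd : 1 <= d.
Hypothesis HD : D < (k + 1) * d.

Lemma p_pos : 2 <= p i.
Proof. destruct Hp as [Hpr _]. apply prime_ge_2 in Hpr. lia. Qed.

Lemma i_lt_pow : i < 2 ^ i.
Proof. apply Nat.pow_gt_lin_r. lia. Qed.

Lemma fstar_inF : forall Sp, inF i (fstar i d Sp).
Proof.
  intros Sp. split.
  - unfold fstar. reflexivity.
  - intros x Hx H1. unfold fstar. rewrite Hx. apply Nat.eqb_neq in H1. rewrite H1. reflexivity.
Qed.

Lemma Zset_bound : forall Sp xh w, In w (Zset i Sp xh) -> (0 < w < Z.of_nat (p i))%Z.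
Proof.
  intros Sp xh w Hw. unfold Zset in Hw. apply in_map_iff in Hw. destruct Hw as [e [<- He]].
  apply filter_In in He. destruct He as [_ He]. unfold danger in He.
  repeat rewrite andb_true_iff in He. destruct He as [[[[_ _] Hx] _] _].
  apply inXb_iff in Hx. pose proof i_lt_pow. destruct Hp as [_ Hp2].
  assert (2 ^ i < 2 ^ (2 ^ i)) by (apply Nat.pow_lt_mono_r; lia).
  lia.
Qed.

Lemma invZ_spec : forall Sp xh,
  ((invZ (Z.of_nat (p i)) (fold_right Z.mul 1%Z (Zset i Sp xh)) *
     fold_right Z.mul 1%Z (Zset i Sp xh)) mod Z.of_nat (p i) = 1)%Z.
Proof.
  intros Sp xh. unfold invZ. apply epsilon_spec.
  apply inv_exists. apply Hp. apply prod_not_div. apply Hp. apply Zset_bound.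
Qed.

Lemma astar_bound : forall Sp xh y j, astar i d p b Sp xh y j < p i.
Proof.
  intros. pose proof p_pos. unfold astar. destruct y; [lia|].
  destruct (fstar i d Sp xh); [|lia].
  match goal with |- Z.to_nat (?v mod ?P) < _ => 
    pose proof (Z.mod_pos_bound v P) end.
  lia.
Qed.

Lemma astar_const : forall Sp xh, inXb i xh = true -> fstar i d Sp xh = true ->
  astar i d p b Sp xh false 0 = b i (fstar i d Sp).
Proof.
  intros Sp xh Hx Hf. unfold astar. rewrite Hf. rewrite coefQ_0.
  pose proof (invZ_spec Sp xh) as Hinv. pose proof (Hb _ (fstar_inF Sp)) as Hbl.
  set (P := Z.of_nat (p i)) in *.
  set (pi := fold_right Z.mul 1%Z (Zset i Sp xh)) in *.
  set (u := invZ P pi) in *.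
  set (c0 := b i (fstar i d Sp)) in *.
  replace (Z.of_nat c0 * u * pi)%Z with (Z.of_nat c0 * (u * pi))%Z by ring.
  rewrite Zmult_mod, Hinv, Z.mul_1_r, Zmod_mod.
  rewrite Z.mod_small by lia. apply Nat2Z.id.
Qed.

Lemma psiStar_pre : forall Sp e, In e Sp -> eyh e <> ey e ->
  fstar i d Sp (ex e) = ey e ->
  psiStar i d p b Sp (ex e) (exh e) = psi0 i d p (ex e) (exh e).
Proof.
  intros Sp e He Hne Hf. pose proof p_pos as Hp2.
  unfold psiStar, psi0, psiFA.
  destruct (inXb i (ex e) && inXb i (exh e)) eqn:Hin; [|reflexivity].
  rewrite Hf. destruct (ey e) eqn:Hy; [reflexivity|].
  assert (Hyh : eyh e = true) by (destruct (eyh e); congruence).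
  unfold Pfun. rewrite Pprime_zero by lia.
  do 3 f_equal.
  unfold astar. destruct (fstar i d Sp (exh e)) eqn:Hfx; [|rewrite Pprime_zero by lia; reflexivity].
  match goal with |- [_ + ?q] = _ => enough (HP : q = 0) by (rewrite HP; reflexivity) end.
  set (l := Zset i Sp (exh e)).
  assert (Hl : length l < d).
  { unfold l, Zset. rewrite length_map.
    apply andb_true_iff in Hin. destruct Hin as [_ Hxh].
    unfold fstar in Hfx. rewrite Hxh in Hfx.
    assert (exh e <> 1) by (intro E; rewrite E in Hxh; rewrite inXb_small in Hxh; auto; lia).
    apply Nat.eqb_neq in H. rewrite H in Hfx. simpl in Hfx.
    repeat rewrite andb_true_iff in Hfx. destruct Hfx as [_ Hs].
    unfold sacr in Hs. apply negb_true_iff, Nat.leb_gt in Hs. unfold cntD in Hs. exact Hs. }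
  apply Nat2Z.inj. rewrite Pprime_eval by lia.
  rewrite prodQ_root. rewrite Z.mul_0_r. reflexivity.
  unfold l, Zset. apply in_map_iff. exists e. split.
  - rewrite Nat2Z.inj_add. simpl. reflexivity.
  - apply filter_In. split; auto. unfold danger. rewrite Hyh, Hy.
    apply andb_true_iff in Hin. destruct Hin as [H1 H2]. rewrite H1, H2, Nat.eqb_refl. reflexivity.
Qed.
Definition Eset (Sp : list entry) : list nat :=
  filter (fun t => ey (nth t Sp dflt_entry) && sacr i d Sp (2 ^ i + t)) (seq 0 (length Sp)).

Lemma Eset_len : forall Sp, Tcnt i Sp <= D -> length (Eset Sp) <= k.
Proof.
  intros Sp HT.
  assert (H1 : d * length (Eset Sp) <= sumL (fun t => cntD i Sp (2 ^ i + t)) (Eset Sp)).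
  { apply sumL_lb. intros t Ht. unfold Eset in Ht. apply filter_In in Ht.
    destruct Ht as [_ Ht]. apply andb_true_iff in Ht. destruct Ht as [_ Ht].
    unfold sacr in Ht. apply Nat.leb_le in Ht. exact Ht. }
  pose proof (sumL_filter (fun t => cntD i Sp (2 ^ i + t))
     (fun t => ey (nth t Sp dflt_entry) && sacr i d Sp (2 ^ i + t)) (seq 0 (length Sp))).
  pose proof (sum_cnt i Sp (2 ^ i) (length Sp)).
  unfold Eset in *.
  set (len := length _) in *.
  destruct (le_lt_dec len k) as [Hk|Hk]; auto. exfalso.
  assert (d * (k + 1) <= d * len) by (apply Nat.mul_le_mono_l; lia).
  lia.
Qed.

Lemma final_cons : forall S, Inv i d D p b S -> length S <= 2 ^ i ->
  exists l psi, inT d p b l psi /\ consistentH Hbullet l /\ kcons k S l psi.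
Proof.
  intros S HI HL. unfold Inv in HI.
  destruct (status i D S) as [Sp c] eqn:Hst.
  destruct HI as [I1 [I2 [I3 I4]]].
  assert (HSp : length Sp <= length S).
  { destruct c. destruct I4 as [ec [post [-> _]]]. rewrite length_app. lia. subst; lia. }
  pose proof (pow_ge4 i Hi) as H4.
  exists (fstar i d Sp), (psiStar i d p b Sp).
  split; [|split].
  - split. apply psiFA_teacher; lia.
    exists i. split; [lia|]. split; [apply fstar_inF|].
    exists (astar i d p b Sp). split; [|split].
    + intros. apply astar_bound.
    + intros xh Hx Hf. apply astar_const; auto.
    + reflexivity.
  - intros xy Hxy. simpl in Hxy. destruct Hxy as [<-|[<-|[]]]; simpl.
    + unfold fstar. rewrite inXb_small by lia. reflexivity.
    + unfold fstar. reflexivity.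
  - exists (Eset Sp). split; [apply Eset_len; auto|].
    assert (Hpre : forall t, t < length Sp -> ~ In t (Eset Sp) ->
       let e := nth t Sp dflt_entry in
       fstar i d Sp (ex e) = ey e /\ (eyh e <> ey e -> psiStar i d p b Sp (ex e) (exh e) = ephi e)).
    { intros t Ht HE e.
      assert (Hex : ex e = 2 ^ i + t) by (apply I1; auto).
      assert (Hf : fstar i d Sp (ex e) = ey e).
      { unfold fstar. rewrite Hex.
        assert (Hin : inXb i (2 ^ i + t) = true) by (apply inXb_iff; lia).
        rewrite Hin. replace (2 ^ i + t - 2 ^ i) with t by lia.
        assert (H1 : Nat.eqb (2 ^ i + t) 1 = false) by (apply Nat.eqb_neq; lia). rewrite H1.
        assert (H2 : Nat.ltb t (length Sp) = true) by (apply Nat.ltb_lt; auto). rewrite H2.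
        simpl. fold e.
        destruct (ey e) eqn:Hy; simpl; auto.
        destruct (sacr i d Sp (2 ^ i + t)) eqn:Hs; auto.
        exfalso. apply HE. unfold Eset. apply filter_In. split.
        apply in_seq. lia. fold e. rewrite Hy, Hs. reflexivity. }
      split; auto. intros Hne.
      assert (HeIn : In e Sp) by (apply nth_In; auto).
      rewrite (I2 e HeIn Hne). apply psiStar_pre; auto. }
    intros t Ht HE. destruct c.
    + destruct I4 as [ec [post [HS [Hc1 [Hc2 [Hc3 Hc4]]]]]].
      subst S. rewrite length_app in Ht. simpl in Ht.
      destruct (Nat.lt_ge_cases t (length Sp)) as [Hlt|Hge].
      * rewrite app_nth1 by auto. apply Hpre; auto.
      * rewrite app_nth2 by auto.
        destruct (t - length Sp) as [|u] eqn:Eu.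
        -- simpl. split.
           ++ unfold fstar. rewrite Hc1, Hc2.
              replace (2 ^ i + length Sp - 2 ^ i) with (length Sp) by lia.
              rewrite Nat.ltb_irrefl.
              assert (Nat.eqb (2 ^ i + length Sp) 1 = false) by (apply Nat.eqb_neq; lia).
              rewrite H. rewrite !andb_false_r. reflexivity.
           ++ intros Hne. symmetry. apply Hc3; auto.
        -- simpl. assert (Hin : In (nth u post dflt_entry) post) by (apply nth_In; lia).
           destruct (Hc4 _ Hin) as [Hx [Hy Hphi]].
           split.
           ++ unfold fstar. rewrite Hx, Hy. rewrite inXb_small by lia. reflexivity.
           ++ intros Hne. rewrite (Hphi Hne). unfold psiStar, psi0, psiFA. rewrite Hx.
              rewrite inXb_small by lia. reflexivity.
    + subst S. apply Hpre; auto.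
Qed.
End Final.

End Part6.
Import Part6.


Lemma as_S : forall A V P S n, almost_surely A V P S (Datatypes.S n) =
  let '(x, y, psi) := V S in
    forall ow, In ow (A S x) -> 0 < snd ow ->
      almost_surely A V P (S ++ [round_entry x y psi (fst ow)]) n.
Proof. reflexivity. Qed.

Theorem mainTheorem16 :
  forall (k d L : nat), (1 <= k)%nat -> (1 <= d)%nat -> (4 * (k + 1) * d <= L)%nat ->
  forall (p : nat -> nat) (b : nat -> feat -> nat),
    (forall i, (1 <= i)%nat -> prime (Z.of_nat (p i)) /\ (2 ^ (2 ^ i) <= p i)%nat) ->
    (forall i f, (1 <= i)%nat -> inF i f -> (b i f < p i)%nat) ->
    (forall i f g, (1 <= i)%nat -> inF i f -> inF i g -> b i f = b i g -> f = g) ->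
  forall A : alg_t, alg_ok Hbullet A ->
  forall B : R,
    (forall V : adv_t, valid_adv k d L p b Hbullet A V -> emist A V [] L <= B) ->
    INR ((k + 1) * d) - 1 <= B.
Proof.
  intros k d L Hk Hd HL p b Hp Hb Hinj A HA B HB.
  set (i := (L + 2)%nat).
  set (D := ((k + 1) * d - 1)%nat).
  assert (Hi : (2 <= i)%nat) by (unfold i; lia).
  assert (HD : (D < (k + 1) * d)%nat) by (unfold D; nia).
  assert (HD1 : (D + 1 = (k + 1) * d)%nat) by (unfold D; nia).
  assert (HLi : (L <= 2 ^ i)%nat).
  { unfold i. pose proof (Nat.pow_gt_lin_r 2 (L + 2)). lia. }
  assert (Hpi := Hp i ltac:(lia)).
  assert (Hbi : forall f, inF i f -> (b i f < p i)%nat) by (intros; apply Hb; auto; lia).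
  set (V := Vadv i d D p b A).
  assert (Hv : valid_adv k d L p b Hbullet A V).
  { split.
    - intros S. unfold V, Vadv. destruct (status i D S) as [Sp c].
      destruct c; simpl; [lia|].
      destruct (Rle_dec _ _); simpl; [lia|]. destruct (Nat.ltb _ _); simpl; lia.
    - assert (Hind : forall n S, Inv i d D p b S -> (length S + n = L)%nat ->
        almost_surely A V (fun S => exists l psi, inT d p b l psi /\ consistentH Hbullet l /\
           kcons k S l psi) S n).
      { induction n as [|n IH]; intros S HI Hlen.
        - simpl. apply (final_cons k i d D p b Hi Hpi Hbi Hd HD S HI). lia.
        - rewrite as_S. pose proof (fun o => Inv_step i d D p b A S o HI) as Hstep.
          fold V in Hstep.
          destruct (V S) as [[x y] psi]. simpl in Hstep.
          intros ow _ _. apply IH. apply Hstep. rewrite length_app. simpl. lia. }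
      apply Hind. apply Inv_nil. simpl. lia. }
  pose proof (HB V Hv) as H1.
  pose proof (emist_lb i d D p b A HA L [] [] eq_refl ltac:(unfold Tcnt; simpl; lia)) as H2.
  fold V in H2. unfold Tcnt in H2. simpl in H2. rewrite Nat.sub_0_r in H2.
  pose proof (G_final D L ltac:(nia)) as H3.
  rewrite <- HD1, plus_INR. simpl. lra.
Qed.
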